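(* Let $\phi$ be a Pogorelov solution and $\phi^*(x)=\sup_{y\in B(0,1)}\{x\cdot y-\phi(y)\}$ its Legendre–Fenchel dual. Let $x\in\mathbb{R}^2$ be any point outside the convex hull of $\{d_1,\dots,d_K\}$. Then $\partial\phi^*(x)\subset\partial B(0,1)$.
   Context: Let $K\ge 1$, $d_1,\dots,d_K\in\mathbb{R}^2$, $\alpha_1,\dots,\alpha_K>0$ with $\sum_k\alpha_k=\pi=|B(0,1)|$, where $B(0,1)$ is the unit ball of $\mathbb{R}^2$, $\partial B(0,1)$ its boundary circle, and $|\cdot|$ is Lebesgue measure. Subgradient of a convex $u$: $\partial u(x)=\{p: u(z)\ge u(x)+p\cdot(z-x)\ \forall z\in\mathbb{R}^2\}$. A Pogorelov solution is a function $\phi(y)=\max_{k}\{y\cdot d_k-v_k\}$ on $B(0,1)$ (extended by $+\infty$ outside $B(0,1)$), for some reals $v_1,\dots,v_K$, such that $|C_k|=\alpha_k$ for every $k$, where $C_k=\{y\in B(0,1):\phi$ is differentiable at $y$ and $\nabla\phi(y)=d_k\}$. *)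

(* Defs.v *)
From HB Require Import structures.
From mathcomp Require Import all_boot all_order all_algebra.
From mathcomp Require Import all_classical all_reals all_analysis.
Set Implicit Arguments. Unset Strict Implicit. Unset Printing Implicit Defensive.
Import Order.TTheory GRing.Theory Num.Theory.
Import numFieldNormedType.Exports.
Local Open Scope classical_set_scope.
Local Open Scope ring_scope.

Section Defs.
Variable R : realType.

Definition dot2 (p q : R * R) : R := p.1 * q.1 + p.2 * q.2.

Definition unit_ball2 : set (R * R) := [set y | dot2 y y < 1].
Definition unit_circle2 : set (R * R) := [set y | dot2 y y = 1].

Definition leb2 := ((@lebesgue_measure R) \x (@lebesgue_measure R))%E.

Definition subgrad (u : R * R -> R) (x : R * R) : set (R * R) :=
  [set p | forall z, u x + dot2 p (z - x) <= u z].

Definition conv_hull (K : nat) (d : 'I_K -> R * R) : set (R * R) :=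
  [set x | exists lam : 'I_K -> R, (forall k, 0 <= lam k) /\
      \sum_(k < K) lam k = 1 /\ x = \sum_(k < K) lam k *: d k].

(* the max-affine function y |-> max_k (y.d_k - v_k) (the Pogorelov
   candidate, before restriction to B(0,1)) *)
Definition maxaff (K : nat) (d : 'I_K -> R * R) (v : 'I_K -> R) (y : R * R) : R :=
  sup [set dot2 y (d k) - v k | k in [set: 'I_K]].

(* C_k = {y in B(0,1) : phi differentiable at y, grad phi(y) = d_k}.
   Since B(0,1) is open, phi (= maxaff on B(0,1), +oo outside) is
   differentiable at y in B(0,1) iff maxaff is. *)
Definition grad_cell (K : nat) (d : 'I_K -> R * R) (v : 'I_K -> R) (k : 'I_K) :
  set (R * R) :=
  [set y | unit_ball2 y /\ differentiable (maxaff d v) y /\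
           forall h : R * R, 'd (maxaff d v) y h = dot2 (d k) h].

Definition pogorelov (K : nat) (d : 'I_K -> R * R) (alpha : 'I_K -> R)
  (v : 'I_K -> R) : Prop :=
  forall k, leb2 (grad_cell d v k) = (alpha k)%:E.

Definition lf_dual (K : nat) (d : 'I_K -> R * R) (v : 'I_K -> R) (x : R * R) : R :=
  sup [set dot2 x y - maxaff d v y | y in unit_ball2].

End Defs.

(* Main.v *)
Require Import Defs.
From HB Require Import structures.
From mathcomp Require Import all_boot all_order all_algebra.
From mathcomp Require Import all_classical all_reals all_analysis.
From mathcomp Require Import ring lra.
Import Order.TTheory GRing.Theory Num.Theory.
Import numFieldNormedType.Exports.
Local Open Scope classical_set_scope.
Local Open Scope ring_scope.

Section S.
Variables (R : realType) (K : nat) (d : 'I_K -> R * R) (v : 'I_K -> R) (k0 : 'I_K).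

Definition g (y : R * R) k := dot2 y (d k) - v k.
Definition Dl (lam : 'I_K -> R) : R * R := \sum_(k < K) lam k *: d k.

Lemma Dl1 lam : (Dl lam).1 = \sum_(k < K) lam k * (d k).1.
Proof. by rewrite /Dl; apply: (big_morph fst) => //. Qed.
Lemma Dl2 lam : (Dl lam).2 = \sum_(k < K) lam k * (d k).2.
Proof. by rewrite /Dl; apply: (big_morph snd) => //. Qed.

Lemma dot2_Dl y lam : dot2 y (Dl lam) = \sum_(k < K) lam k * dot2 y (d k).
Proof.
rewrite /dot2 Dl1 Dl2 !mulr_sumr -big_split /=; apply: eq_bigr => k _; ring.
Qed.

Lemma hs_maxaff y : has_sup [set g y k | k in [set: 'I_K]].
Proof.
split; first by exists (g y k0), k0.
exists (\sum_(k < K) `|g y k|) => _ [k _ <-].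
rewrite (bigD1 k) //=; apply: le_trans (ler_norm _) _.
by rewrite lerDl sumr_ge0.
Qed.

Lemma maxaff_ge y k : g y k <= maxaff d v y.
Proof. by apply: (sup_upper_bound (hs_maxaff y)); exists k. Qed.

Lemma maxaff_att y : exists k, maxaff d v y = g y k.
Proof.
case: (@arg_maxP _ _ _ k0 predT (g y) isT) => k _ Hk.
exists k; apply/le_anti; rewrite maxaff_ge andbT.
apply: ge_sup; first by exists (g y k0), k0.
by move=> _ [j _ <-]; apply: Hk.
Qed.
Definition N (u : R * R) : R := Num.sqrt (@dot2 R u u).

Lemma dot2_ge0 (u : R * R) : 0 <= dot2 u u.
Proof. by rewrite /dot2 addr_ge0 // -expr2 sqr_ge0. Qed.

Lemma N_ge0 (u : R * R) : 0 <= N u. Proof. exact: sqrtr_ge0. Qed.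
Lemma N_sq (u : R * R) : N u ^+ 2 = dot2 u u. Proof. by rewrite sqr_sqrtr // dot2_ge0. Qed.

Lemma cs (a y : R * R) : dot2 y y <= 1 -> dot2 a y <= N a.
Proof.
move=> hy; have s0 := N_ge0 a; have ss := N_sq a.
move: ss hy; rewrite /dot2 => ss hy.
have lag : (a.1 * y.1 + a.2 * y.2)^+2 + (a.1 * y.2 - a.2 * y.1)^+2 =
  (a.1 * a.1 + a.2 * a.2) * (y.1 * y.1 + y.2 * y.2) by ring.
have h2 : 0 <= (a.1 * y.2 - a.2 * y.1)^+2 by apply: sqr_ge0.
have h3 : 0 <= a.1 * a.1 + a.2 * a.2 by rewrite -ss sqr_ge0.
nra.
Qed.

Lemma dot2C (a b : R * R) : dot2 a b = dot2 b a.
Proof. by rewrite /dot2 mulrC [a.2 * _]mulrC. Qed.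

Lemma dot2B (a b c : R * R) : dot2 (a - b) c = dot2 a c - dot2 b c.
Proof. rewrite /dot2 /=; ring. Qed.

Lemma wd (z : R * R) (lam : 'I_K -> R) (hl0 : forall k, 0 <= lam k) (hl1 : \sum_(k < K) lam k = 1)
  y (hy : unit_ball2 y) :
  dot2 z y - maxaff d v y <= N (z - Dl lam) + \sum_(k < K) lam k * v k.
Proof.
have hM : \sum_(k < K) lam k * g y k <= maxaff d v y.
  rewrite -[maxaff _ _ _]mul1r -hl1 mulr_suml; apply: ler_sum => k _.
  by apply: ler_wpM2l => //; apply: maxaff_ge.
have hS : \sum_(k < K) lam k * g y k =
   dot2 y (Dl lam) - \sum_(k < K) lam k * v k.
  by rewrite dot2_Dl -sumrB; apply: eq_bigr => k _; rewrite /g mulrBr.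
have := cs (z - Dl lam) y (ltW hy); rewrite dot2B [dot2 (Dl lam) y]dot2C.
lra.
Qed.
Definition simp (lam : 'I_K -> R) :=
  (forall k, 0 <= lam k) /\ \sum_(k < K) lam k = 1.
Definition Gx (x : R * R) (lam : 'I_K -> R) :=
  N (x - Dl lam) + \sum_(k < K) lam k * v k.

Lemma cont_sum (F : 'I_K -> 'rV[R]_K -> R) :
  (forall k, continuous (F k)) -> continuous (fun l => \sum_(k < K) F k l).
Proof.
move=> hF.
suff H : forall s : seq 'I_K, continuous (fun l => \sum_(k <- s) F k l) by exact: H.
elim => [|a s IH].
  under eq_fun do rewrite big_nil; exact: cst_continuous.
under eq_fun do rewrite big_cons.
by move=> l; apply: (continuousD (hF a l) (IH l)).
Qed.

Lemma coordc k : continuous (fun l : 'rV[R]_K => l ord0 k).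
Proof. exact: coord_continuous. Qed.

Lemma cB (f g : 'rV[R]_K -> R) : continuous f -> continuous g ->
  continuous (fun l => f l - g l).
Proof. by move=> hf hg l; exact: (continuousB (hf l) (hg l)). Qed.
Lemma cD (f g : 'rV[R]_K -> R) : continuous f -> continuous g ->
  continuous (fun l => f l + g l).
Proof. by move=> hf hg l; exact: (continuousD (hf l) (hg l)). Qed.
Lemma cM (f g : 'rV[R]_K -> R) : continuous f -> continuous g ->
  continuous (fun l => f l * g l).
Proof. by move=> hf hg l; exact: (continuousM (hf l) (hg l)). Qed.
Lemma cC (c : R) : continuous (fun _ : 'rV[R]_K => c).
Proof. by move=> l; exact: cst_continuous. Qed.

Lemma exists_min (x : R * R) :
  exists lam, simp lam /\ forall mu, simp mu -> Gx x lam <= Gx x mu.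
Proof.
pose A := [set l : 'rV[R]_K | simp (fun k => l ord0 k)].
pose f (l : 'rV[R]_K) := Gx x (fun k => l ord0 k).
have A0 : A !=set0.
  exists (\row_k (k == k0)%:R); split => [k|]; rewrite ?mxE ?ler0n //.
  under eq_bigr do rewrite mxE.
  by rewrite (bigD1 k0) //= eqxx big1 ?addr0 // => k /negbTE ->.
have csum : continuous (fun l : 'rV[R]_K => \sum_(k < K) l ord0 k).
  by apply: cont_sum => k; exact: coordc.
have clA : closed A.
  have -> : A = (fun l : 'rV[R]_K => \sum_(k < K) l ord0 k) @^-1` [set t | t = 1]
      `&` \bigcap_(k in [set: 'I_K]) ((fun l : 'rV[R]_K => l ord0 k) @^-1` [set t | 0 <= t]).
    apply/seteqP; split => l /=.
      by case=> h1 h2; split => // k _; exact: h1.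
    by case=> h2 h1; split => // k; exact: h1.
  apply: closedI; first by move: csum => /continuous_closedP; apply; exact: closed_eq.
  apply: closed_bigI => k _.
  by move: (coordc k) => /continuous_closedP; apply; exact: closed_ge.
have cA : compact A.
  apply: (subclosed_compact (B := [set l : 'rV[R]_K | forall i, `[0, 1]%classic (l ord0 i)]) clA).
    have := @rV_compact R K (fun=> `[0, 1]%classic).
    by apply => _; exact: segment_compact.
  move=> l [h0 h1] i /=; rewrite in_itv /= h0 /= -h1.
  by rewrite (bigD1 i) //= lerDl sumr_ge0.
have cf : continuous f.
  have -> : f = (fun l => Num.sqrt
     ((x.1 - \sum_(k < K) l ord0 k * (d k).1) * (x.1 - \sum_(k < K) l ord0 k * (d k).1)
    + (x.2 - \sum_(k < K) l ord0 k * (d k).2) * (x.2 - \sum_(k < K) l ord0 k * (d k).2))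
    + \sum_(k < K) l ord0 k * v k).
    by apply: funext => l; rewrite /f /Gx /N /dot2 /= Dl1 Dl2.
  have cs1 : forall c : 'I_K -> R, continuous (fun l : 'rV[R]_K => \sum_(k < K) l ord0 k * c k).
    by move=> c; apply: cont_sum => k; apply: cM; [exact: coordc | exact: cC].
  apply: cD; last exact: cs1.
  move=> l; apply: continuous_comp; last exact: sqrt_continuous.
  by move: l; apply: cD; apply: cM; apply: cB; try exact: cC; exact: cs1.
have [c cA' hc] := EVT_min_rV A0 cA (continuous_subspaceT cf).
exists (fun k => c ord0 k); split; first by move: cA'; rewrite inE.
move=> mu hmu.
have := hc (\row_k mu k); rewrite inE => /(_ _).
have E : (fun k => (\row_k mu k) ord0 k) = mu by apply: funext => k; rewrite mxE.
rewrite /A /f /= E; by apply.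
Qed.
Lemma pair_eq (a b : R * R) : a.1 = b.1 -> a.2 = b.2 -> a = b.
Proof. by case: a b => ? ? [? ?] /= -> ->. Qed.

Lemma N_le (a : R * R) c : 0 <= c -> dot2 a a <= c ^+ 2 -> N a <= c.
Proof.
move=> c0 h; rewrite -(ger0_norm c0) -sqrtr_sqr.
by rewrite /N ler_sqrt // exprn_ge0.
Qed.

Lemma small_le0 (c C : R) : 0 <= C ->
  (forall t, 0 < t < 1 -> c <= t * C) -> c <= 0.
Proof.
move=> C0 h; rewrite leNgt; apply/negP => c0.
have hpos : 0 < C + 2 * c by lra.
pose t := c / (C + 2 * c).
have ht : t * (C + 2 * c) = c by rewrite /t mulrVK // unitfE gt_eqF.
have t0 : 0 < t by rewrite /t divr_gt0.
have t1 : t < 1 by nra.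
have := h t; rewrite t0 t1 => /(_ isT) => hc.
nra.
Qed.

Definition e0 : 'I_K -> R := fun k => (k == k0)%:R.
Lemma simp_e0 : simp e0.
Proof.
split => [k|]; first by rewrite /e0 ler0n.
by rewrite /e0 (bigD1 k0) //= eqxx big1 ?addr0 // => k /negbTE ->.
Qed.

Lemma hs_dual z : has_sup [set dot2 z y - maxaff d v y | y in @unit_ball2 R].
Proof.
split; first by exists (dot2 z 0 - maxaff d v 0), 0 => //; rewrite /unit_ball2 /dot2 /= !mul0r addr0.
exists (Gx z e0) => _ [y hy <-]; case: simp_e0 => h1 h2; exact: wd.
Qed.

Lemma F_le z lam : simp lam -> lf_dual d v z <= Gx z lam.
Proof.
move=> [h1 h2]; apply: ge_sup.
  by exists (dot2 z 0 - maxaff d v 0), 0 => //; rewrite /unit_ball2 /dot2 /= !mul0r addr0.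
by move=> _ [y hy <-]; exact: wd.
Qed.

Lemma F_ge z y : unit_ball2 y -> dot2 z y - maxaff d v y <= lf_dual d v z.
Proof. by move=> hy; apply: (sup_upper_bound (hs_dual z)); exists y. Qed.

Lemma sum_mu (lam c : 'I_K -> R) (k : 'I_K) (t : R) :
  \sum_(j < K) ((1 - t) * lam j + t * (j == k)%:R) * c j =
  (1 - t) * \sum_(j < K) lam j * c j + t * c k.
Proof.
under eq_bigr do rewrite mulrDl.
rewrite big_split /= mulr_sumr; congr (_ + _).
  by apply: eq_bigr => j _; rewrite mulrA.
rewrite (bigD1 k) //= eqxx mulr1 big1 ?addr0 // => j /negbTE ->.
by rewrite mulr0 mul0r.
Qed.
Lemma N_am (a : R * R) s : 0 < s -> N a <= (dot2 a a + s ^+ 2) / (2 * s).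
Proof.
move=> s0; rewrite ler_pdivlMr ?mulr_gt0 //.
have := N_sq a; have := N_ge0 a => h1 h2.
have : 0 <= (N a - s) ^+ 2 by apply: sqr_ge0.
nra.
Qed.

Lemma optim x lam (hs : simp lam)
  (hmin : forall mu, simp mu -> Gx x lam <= Gx x mu)
  (s0 : 0 < N (x - Dl lam)) k :
  ((x - Dl lam).1 * ((d k).1 - (Dl lam).1) + (x - Dl lam).2 * ((d k).2 - (Dl lam).2))
    / N (x - Dl lam) <= v k - \sum_(j < K) lam j * v j.
Proof.
set s := N (x - Dl lam); set P := \sum_(j < K) lam j * v j.
set w1 := (x - Dl lam).1; set w2 := (x - Dl lam).2.
set b1 := (d k).1 - (Dl lam).1; set b2 := (d k).2 - (Dl lam).2.
rewrite -subr_le0.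
apply: (@small_le0 _ ((b1 ^+ 2 + b2 ^+ 2) / (2 * s))).
  by rewrite divr_ge0 ?addr_ge0 ?sqr_ge0 // mulr_ge0 // ltW.
move=> t /andP [t0 t1].
pose mu := fun j => (1 - t) * lam j + t * (j == k)%:R.
have hmu : simp mu.
  case: hs => h1 h2; split => [j|].
    by rewrite /mu addr_ge0 // mulr_ge0 // ?h1 ?ler0n // ?subr_ge0 ltW.
  have := sum_mu lam (fun=> 1) k t; rewrite /mu.
  under eq_bigr do rewrite mulr1.
  move=> ->; under eq_bigr do rewrite mulr1; rewrite h2; ring.
have := hmin mu hmu; rewrite /Gx -/s -/P.
have -> : \sum_(j < K) mu j * v j = (1 - t) * P + t * v k by rewrite /mu sum_mu.
have := @N_am (x - Dl mu) s s0.
have -> : dot2 (x - Dl mu) (x - Dl mu) =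
   (w1 - t * b1) ^+ 2 + (w2 - t * b2) ^+ 2.
  rewrite /dot2 /= !Dl1 !Dl2 /w1 /w2 /b1 /b2 /= Dl1 Dl2 /mu !sum_mu; ring.
have hs2 : s ^+ 2 = w1 ^+ 2 + w2 ^+ 2 by rewrite /s N_sq /dot2 /w1 /w2; ring.
move=> hN hG.
set ws := (w1 * b1 + w2 * b2) / s.
have hws : ws * s = w1 * b1 + w2 * b2 by rewrite /ws divfK // gt_eqF.
set C := (b1 ^+ 2 + b2 ^+ 2) / (2 * s).
have hC : C * (2 * s) = b1 ^+ 2 + b2 ^+ 2 by rewrite /C divfK // mulf_neq0 // gt_eqF.
set Q := (_ + s ^+ 2) / (2 * s) in hN.
have hQ : Q * (2 * s) = (w1 - t * b1) ^+ 2 + (w2 - t * b2) ^+ 2 + s ^+ 2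
  by rewrite /Q divfK // mulf_neq0 // gt_eqF.
have st : 0 < s * t by rewrite mulr_gt0.
have key : 0 <= - 2 * t * (w1 * b1 + w2 * b2) + t ^+ 2 * (b1 ^+ 2 + b2 ^+ 2)
    - 2 * s * t * P + 2 * s * t * v k.
  nra.
rewrite -(ler_pM2r st).
nra.
Qed.
End S.

Arguments Dl {R K}. Arguments N {R}. Arguments Gx {R K}. Arguments simp {R K}.
Arguments exists_min {R K}. Arguments N_sq {R}. Arguments N_ge0 {R}. Arguments optim {R K d v x lam}.
Arguments F_ge {R K d v}. Arguments F_le {R K d v}. Arguments Dl1 {R K}. Arguments Dl2 {R K}.
Arguments maxaff_att {R K d v}. Arguments pair_eq {R}. Arguments N_le {R}. Arguments small_le0 {R}.
Arguments g {R K}.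
Theorem lemma2p6 (R : realType) (K : nat) (hK : (1 <= K)%N)
  (d : 'I_K -> R * R) (alpha : 'I_K -> R) (halpha : forall k, 0 < alpha k)
  (hsum : \sum_(k < K) alpha k = pi)
  (v : 'I_K -> R) (hpog : pogorelov d alpha v)
  (x : R * R) (hx : ~ conv_hull d x) :
  subgrad (lf_dual d v) x `<=` (@unit_circle2 R).
Proof.
move=> p hp.
pose k0 : 'I_K := Ordinal hK.
have [lam [hs hmin]] := exists_min d v k0 x.
set s := N (x - Dl d lam).
set P := \sum_(j < K) lam j * v j.
set w1 := (x - Dl d lam).1; set w2 := (x - Dl d lam).2.
have hs2 : s ^+ 2 = w1 ^+ 2 + w2 ^+ 2 by rewrite /s N_sq /dot2 /w1 /w2; ring.
have sge0 : 0 <= s by apply: N_ge0.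
have s0 : 0 < s.
  rewrite lt_def sge0 andbT; apply/negP => /eqP s00.
  have h0 : w1 ^+ 2 + w2 ^+ 2 = 0 by rewrite -hs2 s00 expr0n.
  move/eqP: h0; rewrite paddr_eq0 ?sqr_ge0 // !sqrf_eq0 => /andP [/eqP hw1 /eqP hw2].
  apply: hx; exists lam; split; first by case: hs.
  split; first by case: hs.
  apply: pair_eq; move: hw1 hw2; rewrite /w1 /w2 /= => ? ?.
    by change (x.1 = (Dl d lam).1); lra.
  by change (x.2 = (Dl d lam).2); lra.
have hw1d : w1 = x.1 - (Dl d lam).1 by [].
have hw2d : w2 = x.2 - (Dl d lam).2 by [].
have LB : s + P <= lf_dual d v x.
  rewrite -subr_le0.
  apply: (small_le0 _ (`|s + P| + \sum_(j < K) `|v j|)).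
    by rewrite addr_ge0 // sumr_ge0.
  move=> t /andP [t0 t1].
  pose r := 1 - t.
  pose q := r / s.
  have hq : q * s = r by rewrite /q divfK // gt_eqF.
  pose y : R * R := (q * w1, q * w2).
  have hy : unit_ball2 y.
    rewrite /unit_ball2 /dot2 /=.
    have -> : q * w1 * (q * w1) + q * w2 * (q * w2) = (q * s) ^+ 2.
      by rewrite exprMn hs2; ring.
    by rewrite hq /r; nra.
  have [k hk] := maxaff_att (d:=d) (v:=v) k0 y.
  have := F_ge (d:=d) (v:=v) k0 x y hy; rewrite hk /g.
  have := optim hs hmin s0 k; rewrite -/s -/P -/w1 -/w2.
  set b1 := (d k).1 - (Dl d lam).1; set b2 := (d k).2 - (Dl d lam).2.
  set ws := (w1 * b1 + w2 * b2) / s.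
  have hws : ws * s = w1 * b1 + w2 * b2 by rewrite /ws divfK // gt_eqF.
  have hb1 : (d k).1 = b1 + (Dl d lam).1 by rewrite /b1; ring.
  have hb2 : (d k).2 = b2 + (Dl d lam).2 by rewrite /b2; ring.
  rewrite /dot2 /= hb1 hb2.
  move=> hopt hF.
  have hM : `|v k| <= \sum_(j < K) `|v j|.
    by rewrite (bigD1 k) //= lerDl sumr_ge0.
  have h1 : s + P <= `|s + P| by apply: ler_norm.
  have h2 : - v k <= `|v k| by rewrite -normrN ler_norm.
  have e1 : q * (w1 * (x.1 - b1 - (Dl d lam).1) + w2 * (x.2 - b2 - (Dl d lam).2))
     = r * s - r * ws.
    have E1 : r * ws = q * (w1 * b1 + w2 * b2) by rewrite -hws -hq; ring.
    have E2 : r * s = q * (w1 ^+ 2 + w2 ^+ 2) by rewrite -hs2 -hq; ring.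
    rewrite E1 E2 hw1d hw2d; ring.
  have e2 : x.1 * (q * w1) + x.2 * (q * w2) -
     (q * w1 * (b1 + (Dl d lam).1) + q * w2 * (b2 + (Dl d lam).2) - v k) =
     q * (w1 * (x.1 - b1 - (Dl d lam).1) + w2 * (x.2 - b2 - (Dl d lam).2)) + v k by ring.
  rewrite e2 e1 in hF.
  have : r * ws <= r * (v k - P) by rewrite ler_wpM2l // /r subr_ge0 ltW.
  rewrite /r in hF *.
  nra.
have hz : forall z, s + P + dot2 p (z - x) <= N (z - Dl d lam) + P.
  move=> z; have := hp z; have := F_le (d:=d) (v:=v) k0 z lam hs; rewrite /Gx -/P.
  lra.
have ha : s <= p.1 * w1 + p.2 * w2.
  have := hz (Dl d lam); rewrite subrr.
  have -> : N (0 : R * R) = 0.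
    by apply/le_anti; rewrite N_ge0 andbT N_le // /dot2 /= !mul0r addr0 expr0n.
  rewrite /dot2 /= hw1d hw2d; lra.
have hb : p.1 * w1 + p.2 * w2 <= s.
  have := hz (x + (x - Dl d lam)).
  have hN : N (x + (x - Dl d lam) - Dl d lam) <= 2 * s.
    apply: N_le; first by rewrite mulr_ge0.
    rewrite /dot2 /=; move: hs2; rewrite hw1d hw2d => hs2'; nra.
  rewrite /dot2 /= hw1d hw2d; lra.
have hpw : p.1 * w1 + p.2 * w2 = s by apply/le_anti; rewrite ha hb.
have hc : (s + (p.1 * p.1 + p.2 * p.2)) ^+ 2 <= (w1 + p.1) ^+ 2 + (w2 + p.2) ^+ 2.
  have := hz (x + p).
  have n2 := N_sq (x + p - Dl d lam); have n0 := N_ge0 (x + p - Dl d lam).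
  move: n2 n0; set n := N _ => n2 n0.
  have -> : (w1 + p.1) ^+ 2 + (w2 + p.2) ^+ 2 = n ^+ 2.
    by rewrite n2 /dot2 /= hw1d hw2d; ring.
  rewrite /dot2 /= => h.
  have h' : s + (p.1 * p.1 + p.2 * p.2) <= n.
    have e : p.1 * (x.1 + p.1 - x.1) + p.2 * (x.2 + p.2 - x.2) = p.1 * p.1 + p.2 * p.2 by ring.
    by move: h; rewrite e; lra.
  have hpp : 0 <= p.1 * p.1 + p.2 * p.2 by rewrite addr_ge0 // -expr2 sqr_ge0.
  nra.
have lag : (p.1 * w1 + p.2 * w2) ^+ 2 + (p.1 * w2 - p.2 * w1) ^+ 2 =
  (p.1 * p.1 + p.2 * p.2) * (w1 ^+ 2 + w2 ^+ 2) by ring.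
rewrite hpw -hs2 in lag.
have hpp : 0 <= p.1 * p.1 + p.2 * p.2 by rewrite addr_ge0 // -expr2 sqr_ge0.
have hlag2 : 0 <= (p.1 * w2 - p.2 * w1) ^+ 2 by apply: sqr_ge0.
have hs2' : 0 < s ^+ 2 by rewrite exprn_gt0.
have ge1 : 1 <= p.1 * p.1 + p.2 * p.2.
  rewrite -(ler_pM2r hs2') mul1r; lra.
have le1 : p.1 * p.1 + p.2 * p.2 <= 1.
  have e : (w1 + p.1) ^+ 2 + (w2 + p.2) ^+ 2 = s ^+ 2 + 2 * s + (p.1 * p.1 + p.2 * p.2).
    rewrite hs2 -hpw; ring.
  rewrite e in hc; nra.
rewrite /unit_circle2 /dot2 /=; apply/le_anti; rewrite ge1 le1 //.
Qed.
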